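(* Let $H$ be a connected graph with a pendant vertex $w$, and let $G$ be the graph formed from $H$ by adding two new vertices $u$ and $v$ which are adjacent to $w$ and to each other but have no other neighbors. If $\overline{H}$ has an orthogonal vector representation in $\mathbb{R}^3$ consisting of pairwise linearly independent vectors, then so does $\overline{G}$.
   Context: All graphs are finite and simple; $\overline{G}$ denotes the complement of $G$. A pendant vertex is a vertex of degree 1. An orthogonal vector representation of a graph $G=(V,E)$ in $\mathbb{R}^d$ is a map $\phi:V\to\mathbb{R}^d$ with $\phi(v)\neq 0$ for all $v$, and for distinct $u,v$: $\langle\phi(u),\phi(v)\rangle=0$ if and only if $uv\notin E$. *)

(* Defs.v *)
From HB Require Import structures.
From mathcomp Require Import all_boot all_order all_algebra.
From mathcomp Require Import reals.
Set Implicit Arguments. Unset Strict Implicit. Unset Printing Implicit Defensive.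
Import Order.TTheory GRing.Theory Num.Theory.
Local Open Scope ring_scope.

Definition simple_graph (T : finType) (e : rel T) : Prop :=
  symmetric e /\ irreflexive e.

Definition compl_graph (T : finType) (e : rel T) : rel T :=
  fun x y => (x != y) && ~~ e x y.

Definition connected_graph (T : finType) (e : rel T) : Prop :=
  forall x y : T, connect e x y.

Definition pendant (T : finType) (e : rel T) (w : T) : Prop :=
  #|[pred y | e w y]| = 1%N.

(* G built from H by adding u := inr true, v := inr false,
   both adjacent to w and to each other, and to nothing else. *)
Definition add_triangle (T : finType) (e : rel T) (w : T) : rel (T + bool) :=
  fun a b => match a, b with
  | inl x, inl y => e x y
  | inl x, inr _ => x == w
  | inr _, inl y => y == w
  | inr b1, inr b2 => b1 != b2
  end.

Definition dot3 (R : realType) (x y : 'rV[R]_3) : R := \sum_(i < 3) x 0 i * y 0 i.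

Definition orth_rep3 (R : realType) (T : finType) (e : rel T) (phi : T -> 'rV[R]_3) : Prop :=
  (forall x, phi x != 0) /\
  (forall x y, x != y -> (dot3 (phi x) (phi y) == 0) = ~~ e x y).

Definition pairwise_lin_indep (R : realType) (T : finType) (phi : T -> 'rV[R]_3) : Prop :=
  forall x y, x != y -> free [:: phi x; phi y].

(* Main.v *)
Require Import Defs.
From HB Require Import structures.
From mathcomp Require Import all_boot all_order all_algebra.
From mathcomp Require Import reals.
From mathcomp Require Import ring lra.
Set Implicit Arguments. Unset Strict Implicit. Unset Printing Implicit Defensive.
Import Order.TTheory GRing.Theory Num.Theory.
Local Open Scope ring_scope.

Lemma scal_key (R : realType) (a0 a1 a2 p0 p1 p2 r0 r1 r2 : R) :
  let q0 := a1 * p2 - a2 * p1 in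
  let q1 := a2 * p0 - a0 * p2 in
  let q2 := a0 * p1 - a1 * p0 in
  a0 * p0 + a1 * p1 + a2 * p2 = 0 ->
  r0 * a0 + r1 * a1 + r2 * a2 = 0 ->
  r0 * p0 + r1 * p1 + r2 * p2 = 0 ->
  r0 * q0 + r1 * q1 + r2 * q2 = 0 ->
  a0 * a0 + a1 * a1 + a2 * a2 != 0 ->
  p0 * p0 + p1 * p1 + p2 * p2 != 0 ->
  [/\ r0 = 0, r1 = 0 & r2 = 0].
Proof.
move=> q0 q1 q2 hap hra hrp hrq ha hp.
set A := a0 * a0 + a1 * a1 + a2 * a2 in ha.
set P := p0 * p0 + p1 * p1 + p2 * p2 in hp.
set rr := r0 * r0 + r1 * r1 + r2 * r2.
have id : rr * (A * P - (a0 * p0 + a1 * p1 + a2 * p2) ^+ 2) =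
  (r0 * q0 + r1 * q1 + r2 * q2) ^+ 2
  + (a0 * (r0 * p0 + r1 * p1 + r2 * p2) - p0 * (r0 * a0 + r1 * a1 + r2 * a2)) ^+ 2
  + (a1 * (r0 * p0 + r1 * p1 + r2 * p2) - p1 * (r0 * a0 + r1 * a1 + r2 * a2)) ^+ 2
  + (a2 * (r0 * p0 + r1 * p1 + r2 * p2) - p2 * (r0 * a0 + r1 * a1 + r2 * a2)) ^+ 2.
  rewrite /rr /A /P /q0 /q1 /q2; ring.
rewrite hap hra hrp hrq in id.
have : rr = 0.
  have h2 : rr * (A * P) = 0 by move: id; rewrite !expr2 !(mulr0, subr0, addr0).
  by move/eqP: h2; rewrite !mulf_eq0 (negbTE ha) (negbTE hp) !orbF => /eqP.
rewrite /rr => h; split; nra.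
Qed.

Section H.
Variable R : realType.
Implicit Types x y z : 'rV[R]_3.

Definition co x (k : nat) : R := x 0 (inord k).

Lemma dot3E x y : dot3 x y = co x 0 * co y 0 + co x 1 * co y 1 + co x 2 * co y 2.
Proof.
rewrite /dot3 !big_ord_recl big_ord0 addr0 addrA /co.
by congr (_ * _ + _ * _ + _ * _); congr (_ _ _); apply/val_inj; rewrite /= inordK.
Qed.

Lemma eq3 x y : co x 0 = co y 0 -> co x 1 = co y 1 -> co x 2 = co y 2 -> x = y.
Proof.
move=> h0 h1 h2; apply/rowP => i; rewrite /co in h0 h1 h2.
have -> : i = inord i by apply/val_inj; rewrite /= inordK.
case: i => [[|[|[|i]]] Hi] //=.
Qed.

Lemma coD x y k : co (x + y) k = co x k + co y k.
Proof. by rewrite /co mxE. Qed.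
Lemma coZ (c : R) x k : co (c *: x) k = c * co x k.
Proof. by rewrite /co mxE. Qed.
Lemma co0 k : co (0 : 'rV[R]_3) k = 0.
Proof. by rewrite /co mxE. Qed.

Definition mk3 (a b c : R) : 'rV[R]_3 := \row_(i < 3) nth 0 [:: a; b; c] i.
Lemma mk3E a b c : [/\ co (mk3 a b c) 0 = a, co (mk3 a b c) 1 = b & co (mk3 a b c) 2 = c].
Proof. by rewrite /co !mxE !inordK. Qed.

Lemma dot3C x y : dot3 x y = dot3 y x.
Proof. rewrite !dot3E; ring. Qed.
Lemma dot3Dl x y z : dot3 (x + y) z = dot3 x z + dot3 y z.
Proof. rewrite !dot3E !coD; ring. Qed.
Lemma dot3Zl (c : R) x z : dot3 (c *: x) z = c * dot3 x z.
Proof. rewrite !dot3E !coZ; ring. Qed.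

Lemma sq3 (a b c : R) : a * a + b * b + c * c = 0 -> [/\ a = 0, b = 0 & c = 0].
Proof. move=> h; split; nra. Qed.

Lemma dot3_eq0 x : (dot3 x x == 0) = (x == 0).
Proof.
apply/eqP/eqP => [|->]; last by rewrite dot3E !co0; ring.
rewrite dot3E => /sq3 [h0 h1 h2]; apply: eq3; by rewrite co0.
Qed.


Definition cross (a p : 'rV[R]_3) := mk3 (co a 1 * co p 2 - co a 2 * co p 1)
  (co a 2 * co p 0 - co a 0 * co p 2) (co a 0 * co p 1 - co a 1 * co p 0).

Lemma dot3_nz x : x != 0 -> dot3 x x != 0.
Proof. by rewrite dot3_eq0. Qed.

Lemma key (a p b : 'rV[R]_3) : a != 0 -> p != 0 -> dot3 p a = 0 -> dot3 p b = 0 ->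
  dot3 (cross a p) b = 0 -> b = (dot3 a b / dot3 a a) *: a.
Proof.
move=> a0 p0 hpa hpb hqb.
have hs := dot3_nz a0; have hp := dot3_nz p0.
set s := dot3 a a in hs *; set k := dot3 a b.
set r := s *: b - k *: a.
have hra : dot3 r a = 0 by rewrite /r dot3Dl -scaleNr !dot3Zl (dot3C b a) /k /s; ring.
have hrp : dot3 r p = 0.
  by rewrite /r dot3Dl -scaleNr !dot3Zl (dot3C b p) hpb (dot3C a p) hpa; ring.
have hqa : dot3 (cross a p) a = 0.
  by rewrite dot3E; case: (mk3E (co a 1 * co p 2 - co a 2 * co p 1)
  (co a 2 * co p 0 - co a 0 * co p 2) (co a 0 * co p 1 - co a 1 * co p 0)) => -> -> ->; ring.
have hrq : dot3 r (cross a p) = 0.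
  by rewrite /r dot3Dl -scaleNr !dot3Zl (dot3C b) hqb (dot3C a) hqa; ring.
move: hrq; rewrite dot3E; case: (mk3E (co a 1 * co p 2 - co a 2 * co p 1)
  (co a 2 * co p 0 - co a 0 * co p 2) (co a 0 * co p 1 - co a 1 * co p 0)) => -> -> -> hrq.
have hs' := dot3_nz a0; have hp' := dot3_nz p0.
rewrite dot3C in hpa.
move: hra hrp hs' hp' hpa; rewrite !dot3E => hra hrp hs' hp' hap.
have [h0 h1 h2] := scal_key hap hra hrp hrq hs' hp'.
have hb i : co r i = 0 -> co b i = co ((k / s) *: a) i.
  rewrite /r coD -scaleNr !coZ => /eqP; rewrite addr_eq0 => /eqP h.
  rewrite -[co b i](mulKf hs) h; field; exact: hs.
by apply: eq3; apply: hb.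
Qed.


Lemma cross_facts (a p : 'rV[R]_3) : a != 0 -> p != 0 -> dot3 p a = 0 ->
  [/\ dot3 (cross a p) a = 0, dot3 (cross a p) p = 0 & cross a p != 0].
Proof.
move=> a0 p0 hpa; have hs := dot3_nz a0; have hp := dot3_nz p0.
rewrite !dot3E in hs hp hpa *.
case: (mk3E (co a 1 * co p 2 - co a 2 * co p 1)
  (co a 2 * co p 0 - co a 0 * co p 2) (co a 0 * co p 1 - co a 1 * co p 0)) => h0 h1 h2.
rewrite /cross h0 h1 h2; split; [ring|ring|].
rewrite -dot3_eq0 dot3E /cross h0 h1 h2.
set A := co a 0 * co a 0 + co a 1 * co a 1 + co a 2 * co a 2 in hs.
set P := co p 0 * co p 0 + co p 1 * co p 1 + co p 2 * co p 2 in hp.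
have -> : (co a 1 * co p 2 - co a 2 * co p 1) * (co a 1 * co p 2 - co a 2 * co p 1) +
  (co a 2 * co p 0 - co a 0 * co p 2) * (co a 2 * co p 0 - co a 0 * co p 2) +
  (co a 0 * co p 1 - co a 1 * co p 0) * (co a 0 * co p 1 - co a 1 * co p 0) =
  A * P - (co p 0 * co a 0 + co p 1 * co a 1 + co p 2 * co a 2) ^+ 2.
  rewrite /A /P; ring.
by rewrite hpa expr2 mulr0 subr0 mulf_neq0.
Qed.

Lemma perp_exists (a : 'rV[R]_3) : a != 0 -> exists p, dot3 p a = 0 /\ p != 0.
Proof.
move=> a0.
case: (boolP ((co a 0 != 0) || (co a 1 != 0))) => h.
  exists (mk3 (co a 1) (- co a 0) 0).
  case: (mk3E (co a 1) (- co a 0) 0) => h0 h1 h2.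
  rewrite -dot3_eq0 !dot3E h0 h1 h2; split; first ring.
  case/orP: h => h.
    have : 0 < co a 0 * co a 0 by rewrite -expr2 exprn_even_gt0 // h orbT.
    move=> hh; apply/eqP => hh'; nra.
  have : 0 < co a 1 * co a 1 by rewrite -expr2 exprn_even_gt0 // h orbT.
  move=> hh; apply/eqP => hh'; nra.
move: h; rewrite negb_or !negbK => /andP [/eqP e0 /eqP e1].
exists (mk3 0 (co a 2) (- co a 1)).
case: (mk3E 0 (co a 2) (- co a 1)) => h0 h1 h2.
rewrite -dot3_eq0 !dot3E h0 h1 h2; split; first ring.
have : co a 2 != 0.
  apply: contra a0 => /eqP e2; apply/eqP; apply: eq3; by rewrite co0.
move=> h; have : 0 < co a 2 * co a 2 by rewrite -expr2 exprn_even_gt0 // h orbT.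
move=> hh; apply/eqP => hh'; nra.
Qed.

Lemma dot3Dr x y z : dot3 z (x + y) = dot3 z x + dot3 z y.
Proof. by rewrite !(dot3C z) dot3Dl. Qed.
Lemma dot3Zr (c : R) x z : dot3 z (c *: x) = c * dot3 z x.
Proof. by rewrite !(dot3C z) dot3Zl. Qed.

Lemma nz_of_dot x z : dot3 x z != 0 -> x != 0.
Proof. apply: contraNneq => ->; rewrite dot3E !co0; apply/eqP; ring. Qed.

Lemma free2 x y z : y != 0 -> dot3 y z = 0 -> dot3 x z != 0 -> free [:: x; y].
Proof.
move=> y0 hyz hxz; rewrite free_cons span_seq1 seq1_free y0 andbT.
apply/vlineP => -[c hc]; move: hxz; rewrite hc dot3Zl hyz mulr0 eqxx.
by [].
Qed.

Lemma free2C x y : free [:: x; y] = free [:: y; x].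
Proof. apply: perm_free; by rewrite -[[:: x; y]]/([:: x] ++ [:: y]) perm_catC. Qed.

Lemma lin_nz (al be t : R) : (al != 0) || (be != 0) -> `|al| / `|be| < t ->
  al + t * be != 0.
Proof.
case: (eqVneq be 0) => [-> | hb] /=.
  by rewrite orbF mulr0 addr0.
move=> _ ht; apply/eqP => h.
have ha : al = - (t * be) by apply/eqP; rewrite -addr_eq0 h.
have hb' : 0 < `|be| by rewrite normr_gt0.
have t0 : 0 < t by apply: le_lt_trans ht; rewrite divr_ge0.
move: ht; rewrite ha normrN normrM (gtr0_norm t0) mulfK ?lt_irreflexive //.
by rewrite normr_eq0.
Qed.

End H.

Unset Implicit Arguments.
Theorem lemma4p6 (R : realType) (T : finType) (e : rel T) (w : T) :
  simple_graph e -> connected_graph e -> pendant e w ->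
  (exists phi : T -> 'rV[R]_3,
     orth_rep3 (compl_graph e) phi /\ pairwise_lin_indep phi) ->
  exists psi : T + bool -> 'rV[R]_3,
     orth_rep3 (compl_graph (add_triangle e w)) psi /\ pairwise_lin_indep psi.
Proof.
move=> _ _ _ [phi [[phinz phiorth] phiind]].
set a := phi w; have anz : a != 0 := phinz w.
have [p [hpa pnz]] := perp_exists anz.
set q := cross a p.
have [hqa hqp qnz] := cross_facts anz pnz hpa; rewrite -/q in hqa hqp qnz.
set c := dot3 q q; set d := dot3 p p.
have cnz : c != 0 := dot3_nz qnz.
have dnz : d != 0 := dot3_nz pnz.
pose al x := dot3 p (phi x); pose be x := dot3 q (phi x).
have albe x : x != w -> (al x != 0) || (be x != 0).
  move=> xw; rewrite -negb_and; apply/negP => /andP[/eqP h1 /eqP h2].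
  have hb := key anz pnz hpa h1 h2.
  move: (phiind x w xw); rewrite free_cons span_seq1 => /andP [/negP H _].
  by apply: H; apply/vlineP; eexists; exact: hb.
pose F x := `|al x| / `|be x| + `|-(d * be x)| / `|c * al x|.
pose t := 1 + \sum_x F x.
have Fge x : 0 <= F x by rewrite /F addr_ge0 // divr_ge0.
have tbig x : F x < t.
  rewrite /t (bigD1 x) //=.
  have : 0 <= \sum_(i | i != x) F i by apply: sumr_ge0.
  lra.
set u := p + t *: q.
set v := (t * c) *: p + (-d) *: q.
have dotu x : dot3 u (phi x) = al x + t * be x.
  by rewrite /u dot3Dl dot3Zl.
have dotv x : dot3 v (phi x) = -(d * be x) + t * (c * al x).
  rewrite /v dot3Dl !dot3Zl /al /be; ring.
have unz x : x != w -> dot3 u (phi x) != 0.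
  move=> xw; rewrite dotu; apply: lin_nz; first exact: albe.
  by apply: le_lt_trans (tbig x); rewrite /F lerDl divr_ge0.
have vnz x : x != w -> dot3 v (phi x) != 0.
  move=> xw; rewrite dotv; apply: lin_nz.
    case/orP: (albe x xw) => h.
      by rewrite mulf_neq0 ?orbT.
    by rewrite oppr_eq0 mulf_neq0.
  by apply: le_lt_trans (tbig x); rewrite /F lerDr divr_ge0.
have uv : dot3 u v = 0.
  rewrite /u /v !(dot3Dl, dot3Dr, dot3Zl, dot3Zr) (dot3C p q) hqp -/c -/d; ring.
have ua : dot3 u a = 0.
  by rewrite /u dot3Dl dot3Zl hpa hqa mulr0 addr0.
have va : dot3 v a = 0.
  by rewrite /v dot3Dl !dot3Zl hpa hqa !mulr0 addr0.
have u0 : u != 0.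
  apply: (@nz_of_dot _ _ p).
  by rewrite /u dot3Dl dot3Zl hqp mulr0 addr0.
have v0 : v != 0.
  apply: (@nz_of_dot _ _ q).
  by rewrite /v dot3Dl !dot3Zl (dot3C p q) hqp mulr0 add0r -/c mulf_neq0 // oppr_eq0.
pose psi (s : T + bool) := match s with inl x => phi x | inr true => u | inr false => v end.
exists psi; split; [split|].
- by case=> [x|[]] /=.
- case=> [x|b1] [y|b2] hne; rewrite /compl_graph /add_triangle /=.
  + by rewrite phiorth.
  + clear hne; rewrite dot3C; case: (eqVneq x w) => [->|xw] /=.
      by case: b2 => /=; rewrite ?ua ?va eqxx.
    by case: b2 => /=; [rewrite (negbTE (unz x xw)) | rewrite (negbTE (vnz x xw))].
  + clear hne; case: (eqVneq y w) => [->|yw] /=.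
      by case: b1 => /=; rewrite ?ua ?va eqxx.
    by case: b1 => /=; [rewrite (negbTE (unz y yw)) | rewrite (negbTE (vnz y yw))].
  + case: b1 b2 hne => [] [] //= _; rewrite ?uv ?(dot3C v u) ?uv eqxx //.
- have key2 x (bb : bool) : free [:: phi x; psi (inr bb)].
    case: (eqVneq x w) => [->|xw].
      case: bb => /=.
        by apply: (free2 (z := a)) => //; rewrite dot3_nz.
      by apply: (free2 (z := a)) => //; rewrite dot3_nz.
    case: bb => /=.
      by apply: (free2 (z := v)) => //; rewrite dot3C; exact: vnz.
    by apply: (free2 (z := u)) => //; [rewrite dot3C | rewrite dot3C; exact: unz].
  case=> [x|b1] [y|b2] hne.
  + by apply: phiind; apply: contra hne => /eqP ->.
  + exact: key2.
  + by rewrite free2C; apply: key2.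
  + case: b1 b2 hne => [] [] //= _.
      by apply: (free2 (z := u)) => //; [rewrite dot3C | exact: dot3_nz].
    by apply: (free2 (z := v)) => //; exact: dot3_nz.
Qed.
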